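(* Let $\mathbf{k}_1,\mathbf{k}_2,\ldots\in\mathbb{R}^{d_k}$, $\mathbf{v}_1,\mathbf{v}_2,\ldots\in\mathbb{R}^{d_v}$, and nonzero scalars $\alpha_s,\beta_s,\gamma_s$. Let $\mathbf{S}_0=\mathbf{0}\in\mathbb{R}^{d_v\times d_k}$ and $$\mathbf{S}_s=\mathbf{S}_{s-1}(\alpha_s\mathbf{I}-\beta_s\mathbf{k}_s\mathbf{k}_s^\top)+\gamma_s\mathbf{v}_s\mathbf{k}_s^\top,\quad s\ge1.$$ Then for every $t\ge1$, $\operatorname{row}\mathbf{S}_t\subseteq\operatorname{span}\langle\mathbf{k}_1,\ldots,\mathbf{k}_t\rangle$ and $\operatorname{col}\mathbf{S}_t\subseteq\operatorname{span}\langle\mathbf{v}_1,\ldots,\mathbf{v}_t\rangle$. Consequently $\operatorname{rank}\mathbf{S}_t\le\min(\operatorname{rank}\mathbf{K}_t,\operatorname{rank}\mathbf{V}_t)$, where $\mathbf{K}_t=(\mathbf{k}_1,\ldots,\mathbf{k}_t)$ and $\mathbf{V}_t=(\mathbf{v}_1,\ldots,\mathbf{v}_t)$.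
   Context: $\operatorname{row}$ and $\operatorname{col}$ denote the row space (a subspace of $\mathbb{R}^{d_k}$) and column space (a subspace of $\mathbb{R}^{d_v}$) of a $d_v\times d_k$ matrix. *)

(* Defs.v *)
From HB Require Import structures.
From mathcomp Require Import all_boot all_order all_algebra.
Set Implicit Arguments. Unset Strict Implicit. Unset Printing Implicit Defensive.
Import Order.TTheory GRing.Theory Num.Theory.
Local Open Scope ring_scope.

Fixpoint Sstate (R : nzRingType) (dk dv : nat)
  (k : nat -> 'cV[R]_dk) (v : nat -> 'cV[R]_dv) (alpha beta gamma : nat -> R)
  (s : nat) : 'M[R]_(dv, dk) :=
  match s with
  | 0 => 0
  | s'.+1 =>
      Sstate k v alpha beta gamma s' *m
        ((alpha s'.+1)%:M - beta s'.+1 *: (k s'.+1 *m (k s'.+1)^T))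
      + gamma s'.+1 *: (v s'.+1 *m (k s'.+1)^T)
  end.

(* K_t = (k_1, ..., k_t) : the dk x t matrix whose j-th column is k_{j+1}. *)
Definition colsmx (R : nzRingType) (d t : nat) (k : nat -> 'cV[R]_d) : 'M[R]_(d, t) :=
  \matrix_(i < d, j < t) k j.+1 i 0.

(* Main.v *)
Require Import Defs.
From HB Require Import structures.
From mathcomp Require Import all_boot all_order all_algebra.
Import Order.TTheory GRing.Theory Num.Theory.
Local Open Scope ring_scope.

Lemma colsmx_row (R : fieldType) d t (k : nat -> 'cV[R]_d) s :
  (0 < s)%N -> (s <= t)%N -> ((k s)^T <= (colsmx t k)^T)%MS.
Proof.
move=> s0 st.
have lt : (s.-1 < t)%N by rewrite prednK.
have -> : (k s)^T = row (Ordinal lt) (colsmx t k)^T.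
  by apply/rowP => j; rewrite !mxE /= prednK.
exact: row_sub.
Qed.

Lemma colsmx_mono (R : fieldType) d t (k : nat -> 'cV[R]_d) :
  ((colsmx t k)^T <= (colsmx t.+1 k)^T)%MS.
Proof.
apply/row_subP => i.
have -> : row i (colsmx t k)^T = (k i.+1)^T.
  by apply/rowP => j; rewrite !mxE.
by apply: colsmx_row => //; rewrite ltnS ltnW.
Qed.

Lemma main_sub (R : fieldType) (dk dv : nat)
  (k : nat -> 'cV[R]_dk) (v : nat -> 'cV[R]_dv) (alpha beta gamma : nat -> R) t :
  (Sstate k v alpha beta gamma t <= (colsmx t k)^T)%MS /\
  ((Sstate k v alpha beta gamma t)^T <= (colsmx t v)^T)%MS.
Proof.
elim: t => [|t [IH1 IH2]] /=; first by rewrite trmx0 !sub0mx.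
split.
- rewrite mulmxBr mul_mx_scalar -scalemxAr mulmxA.
  apply: addmx_sub; last first.
    apply: scalemx_sub; apply: submx_trans (submxMl _ _) _.
    exact: colsmx_row.
  apply: addmx_sub.
    apply: scalemx_sub; apply: (submx_trans IH1); exact: colsmx_mono.
  rewrite -scaleNr; apply: scalemx_sub; apply: submx_trans (submxMl _ _) _.
  exact: colsmx_row.
- rewrite linearD /= trmx_mul !linearZ /= trmx_mul trmxK.
  apply: addmx_sub.
    apply: submx_trans (submxMl _ _) _; apply: (submx_trans IH2); exact: colsmx_mono.
  apply: scalemx_sub; apply: submx_trans (submxMl _ _) _.
  exact: colsmx_row.
Qed.

Theorem propositionF1 (R : realFieldType) (dk dv : nat)
  (k : nat -> 'cV[R]_dk) (v : nat -> 'cV[R]_dv) (alpha beta gamma : nat -> R) :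
  (forall s, (0 < s)%N -> [/\ alpha s != 0, beta s != 0 & gamma s != 0]) ->
  forall t : nat, (1 <= t)%N ->
    [/\ (Sstate k v alpha beta gamma t <= (colsmx t k)^T)%MS,
        ((Sstate k v alpha beta gamma t)^T <= (colsmx t v)^T)%MS
      & (\rank (Sstate k v alpha beta gamma t)
           <= minn (\rank (colsmx t k)) (\rank (colsmx t v)))%N].
Proof.
move=> _ t _.
have [H1 H2] := @main_sub R dk dv k v alpha beta gamma t.
split => //.
rewrite leq_min; apply/andP; split.
  by rewrite -(mxrank_tr (colsmx t k)); apply: mxrankS.
by rewrite -mxrank_tr -(mxrank_tr (colsmx t v)); apply: mxrankS.
Qed.
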